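(* Let $k\ge 2$ and let $s$ be a normalized, fully $k$-ary string of length $n$. Then $d_{\rm g}(s)\le n-2$.
   Context: Strings are finite words over the alphabet $\{0,1,2,\dots\}$. A string is \emph{normalized} if no two adjacent symbols are equal; the \emph{normalization} of a string is obtained by replacing every maximal run of identical symbols by a single copy of that symbol. A string is \emph{fully $k$-ary} if the set of symbols occurring in it is exactly $\{0,1,\dots,k-1\}$. For a normalized string $s=s_1s_2\cdots s_n$ and $1\le i\le n$, the flip (prefix reversal) $f^{(i)}(s)$ is the normalization of $s_i s_{i-1}\cdots s_1 s_{i+1}\cdots s_n$. The \emph{grouping distance} $d_{\rm g}(s)$ of a normalized fully $k$-ary string $s$ is the minimum number of flips needed to transform $s$ into a string of length $k$. *)

(* Defs.v *)
From mathcomp Require Import all_boot.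
Set Implicit Arguments. Unset Strict Implicit. Unset Printing Implicit Defensive.

Definition normalized (s : seq nat) : bool :=
  match s with [::] => true | x :: t => path (fun a b => a != b) x t end.

Fixpoint normalize (s : seq nat) : seq nat :=
  match s with
  | [::] => [::]
  | x :: t => match normalize t with
              | [::] => [:: x]
              | y :: u => if x == y then y :: u else x :: y :: u
              end
  end.

Definition fully_kary (k : nat) (s : seq nat) : Prop :=
  forall a : nat, a \in s <-> a < k.

Definition flip (i : nat) (s : seq nat) : seq nat :=
  normalize (rev (take i s) ++ drop i s).

Fixpoint flips_to (m : nat) (s t : seq nat) : Prop :=
  match m with
  | 0 => s = t
  | m'.+1 => exists i, 1 <= i <= size s /\ flips_to m' (flip i s) t
  end.

(* d_g(s) <= d : some string of length k is reachable with at most d flips *)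
Definition gdist_le (k : nat) (s : seq nat) (d : nat) : Prop :=
  exists m t, m <= d /\ size t = k /\ flips_to m s t.

(* Main.v *)
Require Import Defs.
From mathcomp Require Import all_boot.
From mathcomp Require Import zify.

Lemma mem_normalize (w : seq nat) z : (z \in normalize w) = (z \in w).
Proof.
elim: w z => [|a w IH0] z //=.
have IH := IH0 z; have IHa := IH0 a.
case E: (normalize w) IH IHa => [|y u] IH IHa.
  by rewrite !inE -IH in_nil orbF.
case: eqP => [Hay|_]; last by rewrite !inE -IH inE.
rewrite IH inE; case: eqP => //= ->.
by rewrite -IHa Hay inE eqxx.
Qed.

Lemma normalize_normalized (w : seq nat) : normalized (normalize w).
Proof.
elim: w => [|a w IH] //=.
case: (normalize w) IH => [|y u] IH //.
case: eqP => // /eqP H /=; by rewrite H.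
Qed.

Lemma size_normalize (w : seq nat) : size (normalize w) <= size w.
Proof.
elim: w => [|a w IH] //=.
case: (normalize w) IH => [|y u] /= IH; first by [].
case: eqP => _ /=; lia.
Qed.

Lemma normalize_head x v : exists u, normalize (x :: v) = x :: u.
Proof.
rewrite /=; case: (normalize v) => [|y u]; first by exists [::].
case: eqP => [->|_]; by eexists.
Qed.

Lemma normalize_dup u x v :
  normalize (u ++ x :: x :: v) = normalize (u ++ x :: v).
Proof.
elim: u => [|a u IH]; last by rewrite /= IH.
have [w E] := normalize_head x v.
rewrite cat0s.
change (match normalize (x :: v) with [::] => [:: x]
  | y :: u => if x == y then y :: u else [:: x, y & u] end = normalize (x :: v)).
by rewrite E eqxx.
Qed.

Lemma normalize_rcons w x : x \notin w ->
  normalize (w ++ [:: x]) = normalize w ++ [:: x].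
Proof.
elim: w => [|a w IH] //=; rewrite inE negb_or => /andP [Hxa Hxw].
rewrite IH //.
case: (normalize w) => [|y u] /=.
  by rewrite eq_sym (negbTE Hxa).
by case: eqP.
Qed.

Lemma flip_mem i s z : (z \in flip i s) = (z \in s).
Proof.
by rewrite /flip mem_normalize mem_cat mem_rev -mem_cat cat_take_drop.
Qed.

Lemma undup_size_eq (s1 s2 : seq nat) : s1 =i s2 ->
  size (undup s1) = size (undup s2).
Proof.
move=> H; apply: perm_size; apply: uniq_perm; try exact: undup_uniq.
by move=> z; rewrite !mem_undup H.
Qed.

Lemma lift_flips m u t x : x \notin u -> flips_to m u t ->
  flips_to m (u ++ [:: x]) (t ++ [:: x]).
Proof.
elim: m u t => [|m IH] u t Hx /=; first by move=> ->.
case=> i [/andP [Hi1 Hi2] Hf]; exists i; split.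
  rewrite size_cat /= Hi1 /=; lia.
have -> : flip i (u ++ [:: x]) = flip i u ++ [:: x].
  have Hd : drop i (u ++ [:: x]) = drop i u ++ [:: x].
    rewrite drop_cat; case: ltnP => H //.
    have Hiu : i = size u by apply/eqP; rewrite eqn_leq Hi2 H.
    by rewrite Hiu drop_size subnn.
  rewrite /flip takel_cat // Hd catA normalize_rcons //.
  by rewrite mem_cat mem_rev -mem_cat cat_take_drop.
by apply: IH => //; rewrite flip_mem.
Qed.

Lemma unary_short (s : seq nat) : normalized s -> size (undup s) <= 1 -> size s <= 1.
Proof.
case: s => [|a [|b t]] //.
rewrite /normalized /= => /andP [Hab _] Hu.
have : size [:: a; b] <= size (undup [:: a, b & t]).
  apply: uniq_leq_size; first by rewrite /= inE andbT.
  by move=> z; rewrite mem_undup !inE => /orP [/eqP ->|/eqP ->]; rewrite ?eqxx ?orbT.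
rewrite /=; lia.
Qed.

Lemma main n (s : seq nat) : size s <= n -> normalized s -> 2 <= size (undup s) ->
  gdist_le (size (undup s)) s (size s - 2).
Proof.
elim: n s => [|n IH] s Hs Hn Hk.
  by case: s Hs Hn Hk.
case: (eqVneq (size s) (size (undup s))) => Hsz.
  by exists 0, s; split.
case: s Hs Hn Hk Hsz => [|x s'] // Hs Hn Hk Hsz; move: Hs => /= Hs.
have Hsp : size (undup (x :: s')) <= size (x :: s') := size_undup _.
case: (boolP (x \in s')) => Hx.
- move: Hk Hsz Hsp; rewrite /= Hx => Hk Hsz Hsp.
  set j := index x s'.
  have Hj : j < size s' by rewrite index_mem.
  set T := flip j.+1 (x :: s').
  have HT : T = normalize (rev (take j s') ++ x :: drop j.+1 s').
    rewrite /T /flip /= (drop_nth x Hj) nth_index // rev_cons -cats1 -catA.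
    by rewrite /= normalize_dup.
  have HTs : size T <= size s'.
    rewrite HT; apply: leq_trans (size_normalize _) _.
    rewrite size_cat size_rev /= size_take size_drop Hj; lia.
  have HTm : T =i x :: s' by move=> z; rewrite flip_mem.
  have HTu := undup_size_eq _ _ HTm; move: HTu; rewrite /= Hx => HTu.
  have HTsu : size (undup T) <= size T := size_undup _.
  have [m [t [Hm [Ht Hf]]]] : gdist_le (size (undup T)) T (size T - 2).
    apply: IH; [lia | rewrite HT; exact: normalize_normalized | ].
    by rewrite HTu.
  rewrite -HTu; exists m.+1, t; split; [|split] => //.
    move: Hk; rewrite -HTu; lia.
  exists j.+1; split => //; rewrite /=; lia.
- move: Hk Hsz Hsp; rewrite /= (negbTE Hx) /= => Hk Hsz Hsp.
  have Hn' : normalized s' by move: Hn; case: s'{Hx Hk Hsz Hsp Hs} => //= b t /andP [].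
  case: (leqP (size (undup s')) 1) => Hu.
    have := unary_short _ Hn' Hu; lia.
  set U := normalize (rev s').
  have HUm : U =i s' by move=> z; rewrite mem_normalize mem_rev.
  have HUu := undup_size_eq _ _ HUm.
  have HUs : size U <= size s' by rewrite (leq_trans (size_normalize _)) // size_rev.
  have HUsu : size (undup U) <= size U := size_undup _.
  have [m [t [Hm [Ht Hf]]]] : gdist_le (size (undup U)) U (size U - 2).
    apply: IH; [lia | exact: normalize_normalized | by rewrite HUu].
  exists m.+1, (t ++ [:: x]); split; [|split].
    move: Hm HUs HUsu; rewrite HUu; lia.
    by rewrite size_cat Ht HUu addn1.
  exists (size s').+1; split; first by apply/andP; split.
  have -> : flip (size s').+1 (x :: s') = U ++ [:: x].
    rewrite /flip /= take_size drop_size cats0 rev_cons -cats1 normalize_rcons //.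
    by rewrite mem_rev.
  apply: lift_flips => //; by rewrite HUm.
Qed.

Lemma fully_undup k s : fully_kary k s -> size (undup s) = k.
Proof.
move=> H; rewrite -(size_iota 0 k); apply: perm_size; apply: uniq_perm.
- exact: undup_uniq.
- exact: iota_uniq.
- by move=> z; rewrite mem_undup mem_iota add0n; apply/idP/idP => /H.
Qed.

Theorem lemma3p2 (k : nat) (s : seq nat) :
  2 <= k -> normalized s -> fully_kary k s ->
  gdist_le k s (size s - 2).
Proof.
move=> Hk Hn Hf; have Hu := fully_undup _ _ Hf.
have Hk' : 2 <= size (undup s) by rewrite Hu.
have := main (size s) s (leqnn _) Hn Hk'.
by rewrite Hu.
Qed.
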